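(* Let $M$ be a magma satisfying $xy = xz$ and $(xy)z = xy$ for all $x,y,z\in M$. Then $M$ satisfies $xy = x$ for all $x,y\in M$ if and only if $M$ avoids the $2$-element null semigroup $2_N$ on $\{0,1\}$ with Cayley table \[ \begin{array}{c|cc} 2_{N} & 0 & 1 \\ \hline 0 & 0 & 0 \\ 1 & 0 & 0 \end{array}. \]
   Context: A magma is a nonempty set with a binary operation, written by juxtaposition. A magma $M$ avoids a magma $F$ if no submagma of $M$ is isomorphic to $F$. *)

(* Defs.v *)
Definition is_submagma {M : Type} (op : M -> M -> M) (S : M -> Prop) : Prop :=
  (exists x, S x) /\ (forall x y, S x -> S y -> S (op x y)).

Definition submagma_iso {M F : Type} (op : M -> M -> M) (opF : F -> F -> F)
  (S : M -> Prop) : Prop :=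
  exists f : F -> M,
    (forall a, S (f a)) /\
    (forall a b, f a = f b -> a = b) /\
    (forall x, S x -> exists a, f a = x) /\
    (forall a b, f (opF a b) = op (f a) (f b)).

Definition avoids {M F : Type} (op : M -> M -> M) (opF : F -> F -> F) : Prop :=
  ~ (exists S : M -> Prop, is_submagma op S /\ submagma_iso op opF S).

(* The 2-element null semigroup 2_N on {0,1} (encoded as bool, 0 = false):
   every product is 0. *)
Definition null2 (a b : bool) : bool := false.

(* Main.v *)
Require Import Defs.
From Stdlib Require Import Classical.

Theorem mainTheorem7 (M : Type) (op : M -> M -> M) (m0 : M)
  (h1 : forall x y z : M, op x y = op x z)
  (h2 : forall x y z : M, op (op x y) z = op x y) :
  (forall x y : M, op x y = x) <-> avoids op null2.
Proof.
  split.
  - intros H [S [_ [f [_ [inj [_ hom]]]]]].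
    assert (E : f false = f true).
    { change (f (null2 true true) = f true). rewrite (hom true true). apply H. }
    apply inj in E. discriminate.
  - intros Hav x y. apply NNPP. intros Hne.
    apply Hav.
    set (a := op x y).
    exists (fun z => z = a \/ z = x).
    assert (Hx : forall w, op x w = a) by (intro w; apply h1).
    assert (Ha : forall w, op a w = a) by (intro w; apply h2).
    split.
    + split. exists a; auto.
      intros u v [->| ->] _; left; auto.
    + exists (fun b : bool => if b then x else a).
      split; [|split; [|split]].
      * intros [|]; auto.
      * intros [|] [|] E; auto; exfalso; apply Hne; auto.
      * intros z [->| ->]; [exists false|exists true]; auto.
      * intros [|] b; simpl; unfold null2; auto.
Qed.
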